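(* Assume the setting described in the context, with vertex polynomials $p_1,\dots,p_{2^m}$. Then: (i) $\Psi^-$ is initially positive if and only if every $p_i$ is initially positive; (ii) $\Psi^+$ is initially positive if and only if at least one $p_i$ is initially positive; (iii) there exists $\kappa\ge0$ with $\Psi^-(\kappa)<0$ if and only if there exist $\kappa\ge 0$ and an index $i$ with $p_i(\kappa)<0$; (iv) there exists $\kappa\ge0$ with $\Psi^+(\kappa)<0$ if and only if there exists $\kappa\ge0$ with $p_i(\kappa)<0$ for all $i$.
   Context: Let $n,m\ge 1$, $B\in\mathbb{Z}^{n\times m}$, $C\in\mathbb{Z}^{m\times n}$, and $J_2,J_4\in\mathbb{R}^{n\times n}$ symmetric. Given bounds $0\le \Delta_j^-\le \Delta_j^+<\infty$ ($j=1,\dots,m$), $\mathcal{D}$ is the set of diagonal matrices $\Delta=\mathrm{diag}(\Delta_1,\dots,\Delta_m)$ with $\Delta_j^-\le\Delta_j\le\Delta_j^+$. For real $\kappa\ge0$, $\Psi^-(\kappa)=\min_{\Delta\in\mathcal{D}}\det[-(B\Delta C+\kappa^2J_2+\kappa^4J_4)]$ and $\Psi^+(\kappa)=\max_{\Delta\in\mathcal{D}}\det[-(B\Delta C+\kappa^2J_2+\kappa^4J_4)]$. Let $\Delta^{(1)},\dots,\Delta^{(2^m)}$ be the vertices of $\mathcal{D}$ (all $\Delta_j\in\{\Delta_j^-,\Delta_j^+\}$) and $p_i(\kappa)=\det[-(B\Delta^{(i)}C+\kappa^2J_2+\kappa^4J_4)]$. A function $f$ on $[0,\infty)$ is initially positive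 if there is $\hat\kappa>0$ with $f(\kappa)>0$ for all $\kappa\in(0,\hat\kappa)$. *)

(* Defs.v *)
From HB Require Import structures.
From mathcomp Require Import all_boot all_order all_algebra.
From mathcomp Require Import boolp classical_sets reals.
Set Implicit Arguments. Unset Strict Implicit. Unset Printing Implicit Defensive.
Import Order.TTheory GRing.Theory Num.Theory.
Local Open Scope ring_scope.
Local Open Scope classical_set_scope.

Section Defs.
Variables (R : realType) (n m : nat).
Variables (B : 'M[int]_(n, m)) (C : 'M[int]_(m, n)) (J2 J4 : 'M[R]_n).

Definition Mk (d : 'rV[R]_m) (k : R) : 'M[R]_n :=
  - (map_mx intr B *m diag_mx d *m map_mx intr C + (k ^+ 2) *: J2 + (k ^+ 4) *: J4).

Definition detk (d : 'rV[R]_m) (k : R) : R := \det (Mk d k).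

(* The box D of admissible diagonal matrices, encoded by their diagonals. *)
Definition Dset (dm dp : 'I_m -> R) : set 'rV[R]_m :=
  [set d | forall j : 'I_m, dm j <= d ord0 j <= dp j].

(* Ψ^- and Ψ^+ : min / max over the compact box D (attained, so = inf / sup). *)
Definition Psi_minus (dm dp : 'I_m -> R) (k : R) : R :=
  inf [set detk d k | d in Dset dm dp].
Definition Psi_plus (dm dp : 'I_m -> R) (k : R) : R :=
  sup [set detk d k | d in Dset dm dp].

Definition vertex (dm dp : 'I_m -> R) (s : {ffun 'I_m -> bool}) : 'rV[R]_m :=
  \row_j (if s j then dp j else dm j).

Definition pvert (dm dp : 'I_m -> R) (s : {ffun 'I_m -> bool}) (k : R) : R :=
  detk (vertex dm dp s) k.
End Defs.

Definition initially_positive (R : realType) (f : R -> R) : Prop :=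
  exists khat : R, 0 < khat /\ forall k : R, 0 < k < khat -> 0 < f k.

(* Main.v *)
Require Import Defs.
From HB Require Import structures.
From mathcomp Require Import all_boot all_order all_algebra.
From mathcomp Require Import boolp classical_sets reals.
From mathcomp Require Import ring lra.
Import Order.TTheory GRing.Theory Num.Theory.
Local Open Scope ring_scope.


Lemma cofactor_eq (F : comNzRingType) n (A A' : 'M[F]_n) i0 j :
  (forall i k, i != i0 -> A i k = A' i k) -> cofactor A i0 j = cofactor A' i0 j.
Proof.
move=> H; rewrite /cofactor; congr (_ * _); congr (\det _).
by apply/matrixP => i k; rewrite !mxE; apply: H; rewrite eq_sym neq_lift.
Qed.

Lemma det_rank1_affine (F : fieldType) n (N : 'M[F]_n) (u : 'cV_n) (w : 'rV_n) :
  exists a b, forall t, \det (N + t *: (u *m w)) = a + b * t.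
Proof.
pose Big t := block_mx (1%:M : 'M_1) (t *: w) (-u) N.
have E t : \det (Big t) = \det (N + t *: (u *m w)).
  have : block_mx 1%:M 0 u 1%:M *m Big t = block_mx 1%:M (t *: w) 0 (N + t *: (u *m w)).
    rewrite mulmx_block !mul1mx !mul0mx !addr0 mulmx1 addrN.
    by rewrite -scalemxAr addrC.
  move/(congr1 determinant); rewrite det_mulmx det_lblock det_ublock !det1 !mul1r.
  by [].
have o0 : (ord0 : 'I_(1+n)) = lshift n ord0 by apply/val_inj.
have Erow t j : Big t ord0 j = Big 0 ord0 j + t * (row_mx 0 w : 'rV[F]_(1+n)) 0 j.
  rewrite o0; case: (split_ordP j) => j' ->.
    by rewrite /Big !block_mxEul row_mxEl !mxE mulr0 addr0.
  by rewrite /Big !block_mxEur row_mxEr !mxE mul0r add0r.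
have Ecof t j : cofactor (Big t) ord0 j = cofactor (Big 0) ord0 j.
  apply: cofactor_eq => i k; rewrite o0; case: (split_ordP i) => i' ->.
    by rewrite (ord1 i') eqxx.
  by move=> _; rewrite /Big; case: (split_ordP k) => k' ->; rewrite ?block_mxEdl ?block_mxEdr.
exists (\sum_j Big 0 ord0 j * cofactor (Big 0) ord0 j).
exists (\sum_j (row_mx 0 w : 'rV[F]_(1+n)) 0 j * cofactor (Big 0) ord0 j).
move=> t; rewrite -E (expand_det_row _ ord0) mulr_suml -big_split /=.
apply: eq_bigr => j _; rewrite Ecof Erow; ring.
Qed.


Lemma upd_entry (R : realType) m (d : 'rV[R]_m) j0 t j :
  (d + t *: delta_mx 0 j0) ord0 j = d ord0 j + t * (j == j0)%:R.
Proof. by rewrite !mxE eqxx. Qed.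

Lemma vertex_min (R : realType) m (dm dp : 'I_m -> R) (hdmp : forall j, dm j <= dp j)
  (F : 'rV[R]_m -> R)
  (HF : forall d j, exists a b, forall t, F (d + t *: delta_mx 0 j) = a + b * t) :
  forall d, Dset dm dp d -> exists s, F (vertex dm dp s) <= F d.
Proof.
suff H : forall N d, Dset dm dp d ->
    (forall j : 'I_m, (N <= j)%N -> d ord0 j = dm j \/ d ord0 j = dp j) ->
    exists s, F (vertex dm dp s) <= F d.
  by move=> d hd; apply: (H m) => // j; rewrite leqNgt ltn_ord.
elim=> [|N IH] d hd hv.
  exists [ffun j => d ord0 j == dp j].
  suff -> : vertex dm dp [ffun j => d ord0 j == dp j] = d by rewrite lexx.
  apply/matrixP => i j; rewrite (ord1 i) mxE ffunE.
  by case: eqP => // /eqP; case: (hv j (leq0n _)) => -> //; rewrite eqxx.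
case: (ltnP N m) => hN; last first.
  apply: IH => // j hj; exfalso; move: (ltn_ord j); rewrite ltnNge.
  by rewrite (leq_trans hN hj).
pose j0 := Ordinal hN.
have [a [b Hab]] := HF d j0.
have Hset v : v = dm j0 \/ v = dp j0 ->
    exists s, F (vertex dm dp s) <= a + b * (v - d ord0 j0).
  move=> hv0; rewrite -Hab; apply: IH.
    move=> j; rewrite upd_entry; case: (eqVneq j j0) => [->|hj].
      by rewrite mulr1 addrC subrK; case: hv0 => ->; rewrite hdmp lexx.
    by rewrite mulr0 addr0; apply: hd.
  move=> j hj; rewrite upd_entry; case: (eqVneq j j0) => [->|hjj].
    by rewrite mulr1 addrC subrK.
  rewrite mulr0 addr0; apply: hv; rewrite ltn_neqAle hj andbT.
  by apply: contra hjj => /eqP e; apply/eqP/val_inj.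
have Fd : F d = a by move: (Hab 0); rewrite scale0r addr0 mulr0 addr0.
have /andP [h1 h2] := hd j0.
rewrite Fd; case: (lerP 0 b) => hb.
  have [s hs] := Hset (dm j0) (or_introl erefl); exists s.
  apply: (le_trans hs); nra.
have [s hs] := Hset (dp j0) (or_intror erefl); exists s.
apply: (le_trans hs); nra.
Qed.


Lemma Mk_upd (R : realType) n m (B : 'M[int]_(n, m)) C (J2 J4 : 'M[R]_n) d j k t :
  Mk B C J2 J4 (d + t *: delta_mx 0 j) k =
  Mk B C J2 J4 d k + t *: ((- col j (map_mx intr B)) *m row j (map_mx intr C)).
Proof.
rewrite /Mk.
have -> : diag_mx (d + t *: delta_mx 0 j) = diag_mx d + t *: delta_mx j j.
  apply/matrixP => a b; rewrite !mxE eqxx /=.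
  case: (eqVneq a b) => [<-|hab]; case: (eqVneq a j) => [ea|haj] //=;
    rewrite ?mulr1n ?mulr0n ?mulr1 ?mulr0 ?addr0 //.
  by rewrite ea eq_sym in hab; rewrite (negPf hab) mulr0 addr0.
rewrite mulmxDr mulmxDl -scalemxAr -scalemxAl.
have -> : map_mx intr B *m delta_mx j j *m map_mx intr C =
  col j (map_mx (intr : int -> R) B) *m row j (map_mx intr C).
  by rewrite colE rowE mulmxA -(mulmxA _ (delta_mx j 0)) mul_delta_mx.
rewrite mulNmx scalerN -opprD; congr (- _); rewrite -!addrA; congr (_ + _); rewrite addrC -!addrA; congr (_ + _); exact: addrC.
Qed.


Lemma detk_poly (R : realType) n m (B : 'M[int]_(n, m)) C (J2 J4 : 'M[R]_n) d :
  exists q : {poly R}, forall k, detk B C J2 J4 d k = q.[k].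
Proof.
pose A := map_mx intr B *m diag_mx d *m map_mx intr C.
pose P : 'M[{poly R}]_n := - (map_mx polyC A + 'X^2 *: map_mx polyC J2 + 'X^4 *: map_mx polyC J4).
exists (\det P) => k.
rewrite -horner_evalE -det_map_mx /detk; congr (\det _).
by apply/matrixP => i j; rewrite !mxE /= horner_evalE !hornerE.
Qed.


Lemma pos_bound {R : realType} (rs : seq R) : all (fun x => 0 < x) rs ->
  exists2 e, 0 < e & forall y, y \in rs -> e <= y.
Proof.
elim: rs => [_|x rs IH /= /andP [hx hrs]]; first by exists 1.
have [e he H] := IH hrs; exists (Order.min e x); first by rewrite lt_min he hx.
move=> y; rewrite inE => /orP [/eqP ->|hy]; rewrite ge_min ?lexx ?orbT //.
by rewrite H.
Qed.

Lemma no_roots_near0 {R : realType} (q : {poly R}) : q != 0 ->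
  exists2 e, 0 < e & forall x, 0 < x < e -> ~~ root q x.
Proof.
move=> hq; apply: contrapT => H.
have H' : forall e, 0 < e -> exists x, 0 < x < e /\ root q x.
  move=> e he; apply: contrapT => H2; apply: H; exists e => // x hx.
  by apply/negP => hr; apply: H2; exists x.
have Hn : forall N, exists rs : seq R,
    [/\ size rs = N, uniq rs, all (root q) rs & all (fun x => 0 < x) rs].
  elim=> [|N [rs [hs hu hr hp]]]; first by exists [::].
  have [e he hb] := pos_bound _ hp.
  have [x [/andP [hx0 hxe] hrx]] := H' e he.
  exists (x :: rs); split => /=; rewrite ?hs ?hu ?hr ?hp ?hrx ?hx0 ?andbT //.
  apply/negP => /hb hle; move: (lt_le_trans hxe hle); by rewrite ltxx.
have [rs [hs hu hr _]] := Hn (size q).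
by move: (max_poly_roots hq hr hu); rewrite hs ltnn.
Qed.

Lemma poly_sign_near0 {R : realType} (q : {poly R}) :
  exists2 e, 0 < e &
    ((forall x, 0 < x < e -> 0 < q.[x]) \/ (forall x, 0 < x < e -> q.[x] <= 0)).
Proof.
case: (eqVneq q 0) => [->|hq].
  by exists 1 => //; right => x _; rewrite horner0.
have [e he hr] := no_roots_near0 _ hq; exists e => //.
case: (pselect (exists x, 0 < x < e /\ 0 < q.[x])) => [[x0 [hx0 hq0]]|hno].
  left => x hx; rewrite ltNge; apply/negP => hle.
  case/andP: hx => hx1 hx2; case/andP: hx0 => hx01 hx02.
  case: (lerP x x0) => hxx.
    have [y /andP [hy1 hy2] hy] : exists2 y, x <= y <= x0 & root q y.
      by apply: poly_ivt => //; rewrite hle ltW.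
    have : 0 < y < e by apply/andP; split; [exact: lt_le_trans hy1|exact: le_lt_trans hx02].
    by move/hr; rewrite hy.
  have [y /andP [hy1 hy2] hy] : exists2 y, x0 <= y <= x & root (- q) y.
    apply: poly_ivt; first exact: ltW.
    by rewrite !hornerN oppr_le0 oppr_ge0 hle andbT ltW.
  have : 0 < y < e by apply/andP; split; [exact: lt_le_trans hy1|exact: le_lt_trans hx2].
  by move/hr; rewrite -[q]opprK rootN hy.
right => x hx; rewrite leNgt; apply/negP => h; apply: hno; exists x; split.
  exact: hx.
exact: h.
Qed.


Lemma inf_min {R : realType} (E : set R) x : E x -> lbound E x -> inf E = x.
Proof.
move=> Ex lb; apply/le_anti/andP; split.
  have hl : has_lbound E by exists x.
  exact: (ge_inf hl Ex).
by apply: lb_le_inf => //; exists x.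
Qed.

Lemma sup_max {R : realType} (E : set R) x : E x -> ubound E x -> sup E = x.
Proof.
move=> Ex ub; apply/le_anti/andP; split.
  by apply: ge_sup => //; exists x.
have hu : has_ubound E by exists x.
exact: (ub_le_sup hu Ex).
Qed.

Theorem proposition2 (R : realType) (n m : nat) (hn : (0 < n)%N) (hm : (0 < m)%N)
  (B : 'M[int]_(n, m)) (C : 'M[int]_(m, n)) (J2 J4 : 'M[R]_n)
  (hJ2 : J2^T = J2) (hJ4 : J4^T = J4)
  (dm dp : 'I_m -> R) (hdm : forall j, 0 <= dm j) (hdmp : forall j, dm j <= dp j) :
  let Psim := Psi_minus B C J2 J4 dm dp in
  let Psip := Psi_plus B C J2 J4 dm dp in
  let p := pvert B C J2 J4 dm dp in
  [/\ initially_positive Psim <-> (forall s, initially_positive (p s)),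
      initially_positive Psip <-> (exists s, initially_positive (p s)),
      (exists k, 0 <= k /\ Psim k < 0) <-> (exists k s, 0 <= k /\ p s k < 0)
    & (exists k, 0 <= k /\ Psip k < 0) <-> (exists k, 0 <= k /\ forall s, p s k < 0)].
Proof.
move=> Psim Psip p.
pose s0 : {ffun 'I_m -> bool} := [ffun=> false].
have Hvin s : Dset dm dp (vertex dm dp s).
  by move=> j; rewrite mxE; case: (s j); rewrite hdmp lexx.
have Aff k d j : exists a b, forall t,
    detk B C J2 J4 (d + t *: delta_mx 0 j) k = a + b * t.
  have [a [b H]] := det_rank1_affine _ _ (Mk B C J2 J4 d k)
     (- col j (map_mx intr B)) (row j (map_mx intr C)).
  by exists a, b => t; rewrite /detk Mk_upd.
have Hlo k d : Dset dm dp d -> exists s, p s k <= detk B C J2 J4 d k.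
  exact: (@vertex_min _ _ dm dp hdmp (fun d => detk B C J2 J4 d k) (Aff k)).
have Hhi k d : Dset dm dp d -> exists s, detk B C J2 J4 d k <= p s k.
  move=> hd.
  have [|s hs] := @vertex_min _ _ dm dp hdmp (fun d => - detk B C J2 J4 d k) _ _ hd.
    move=> d' j; have [a [b H]] := Aff k d' j.
    by exists (- a), (- b) => t; rewrite H opprD mulNr.
  by exists s; rewrite -lerN2.
have PmE k : (forall s, Psim k <= p s k) /\ exists s, Psim k = p s k.
  case: (@arg_minP _ _ _ s0 xpredT (fun s => p s k) isT) => s1 _ Hs.
  have E : Psim k = p s1 k.
    rewrite /Psim /Psi_minus; apply: inf_min; first by exists (vertex dm dp s1).
    move=> y [d hd <-]; have [s hs] := Hlo k d hd.
    exact: le_trans (Hs s isT) hs.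
  by split; [move=> s; rewrite E; exact: Hs | exists s1].
have PpE k : (forall s, p s k <= Psip k) /\ exists s, Psip k = p s k.
  case: (@arg_maxP _ _ _ s0 xpredT (fun s => p s k) isT) => s1 _ Hs.
  have E : Psip k = p s1 k.
    rewrite /Psip /Psi_plus; apply: sup_max; first by exists (vertex dm dp s1).
    move=> y [d hd <-]; have [s hs] := Hhi k d hd.
    exact: le_trans hs (Hs s isT).
  by split; [move=> s; rewrite E; exact: Hs | exists s1].
split.
- split.
    move=> [kh [hk H]] s; exists kh; split => // k hk'.
    exact: lt_le_trans (H k hk') ((PmE k).1 s).
  move=> H; have [f hf] := choice H.
  case: (@arg_minP _ _ _ s0 xpredT f isT) => s1 _ Hs1.
  exists (f s1); split; first by case: (hf s1).
  move=> k /andP [k0 kk]; have [_ [s ->]] := PmE k.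
  apply: (proj2 (hf s)); rewrite k0 /=; exact: lt_le_trans kk (Hs1 s isT).
- split; last first.
    move=> [s [kh [hk H]]]; exists kh; split => // k hk'.
    exact: lt_le_trans (H k hk') ((PpE k).1 s).
  move=> [kh [hk H]]; apply: contrapT => hno.
  have Hs s : exists e, 0 < e /\ forall x, 0 < x < e -> p s x <= 0.
    have [q hq] := detk_poly _ _ _ B C J2 J4 (vertex dm dp s).
    have [e he [hpos|hneg]] := poly_sign_near0 q.
      exfalso; apply: hno; exists s, e; split => // x hx.
      by rewrite /p /pvert hq; exact: hpos.
    by exists e; split => // x hx; rewrite /p /pvert hq; exact: hneg.
  have [f hf] := choice Hs.
  case: (@arg_minP _ _ _ s0 xpredT f isT) => s1 _ Hs1.
  pose e := Order.min kh (f s1).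
  have he : 0 < e by rewrite lt_min hk (proj1 (hf s1)).
  have hk1 : 0 < e / 2 by rewrite divr_gt0.
  have hk2 : e / 2 < e by rewrite ltr_pdivrMr // ltr_pMr // ltr1n.
  have hkh : e / 2 < kh by apply: (lt_le_trans hk2); rewrite ge_min lexx.
  have := H (e / 2); rewrite hk1 hkh => /(_ isT).
  have [_ [s ->]] := PpE (e / 2).
  have : p s (e / 2) <= 0.
    apply: (proj2 (hf s)); rewrite hk1 /=.
    apply: (lt_le_trans hk2); apply: le_trans (Hs1 s isT).
    by rewrite ge_min lexx orbT.
  by move=> h1 h2; move: (lt_le_trans h2 h1); rewrite ltxx.
- split.
    move=> [k [hk hlt]]; have [_ [s E]] := PmE k; exists k, s; by rewrite -E.
  move=> [k [s [hk hlt]]]; exists k; split => //.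
  exact: le_lt_trans ((PmE k).1 s) hlt.
- split.
    move=> [k [hk hlt]]; exists k; split => // s.
    exact: le_lt_trans ((PpE k).1 s) hlt.
  move=> [k [hk H]]; exists k; split => //; have [_ [s ->]] := PpE k; exact: H.
Qed.
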